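(* Let $\preceq$ be a left quasi-order on a group $G$. If $a,b,c\in G$ satisfy $[a,b]=a^{-1}b^{-1}ab=c^{r}$ for some $r\in\mathbb{Z}\setminus\{0\}$, and $c$ commutes with both $a$ and $b$, then either $c\ll a$ or $c\ll b$.
   Context: A left quasi-order on a group $G$ is a binary relation $\preceq$ on $G$ such that: (1) for all $g,h\in G$, $g\preceq h$ or $h\preceq g$; (2) for all $f,g,h\in G$, $f\preceq g$ and $g\preceq h$ imply $f\preceq h$; (3) for all $f,g,h\in G$, $g\preceq h$ implies $fg\preceq fh$. For $g,h\in G$ one writes $g\ll h$ if either $g^k\preceq h$ for all $k\in\mathbb{Z}$, or $g^k\preceq h^{-1}$ for all $k\in\mathbb{Z}$. *)

(* Defs.v *)
From Stdlib Require Import ZArith.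

Record Group := {
  carrier :> Type;
  gmul : carrier -> carrier -> carrier;
  gone : carrier;
  ginv : carrier -> carrier;
  gmul_assoc : forall x y z, gmul x (gmul y z) = gmul (gmul x y) z;
  gmul_1l : forall x, gmul gone x = x;
  gmul_1r : forall x, gmul x gone = x;
  gmul_Vl : forall x, gmul (ginv x) x = gone;
  gmul_Vr : forall x, gmul x (ginv x) = gone
}.

Arguments gmul {g} _ _.
Arguments gone {g}.
Arguments ginv {g} _.

Fixpoint npow {G : Group} (g : G) (n : nat) : G :=
  match n with
  | O => gone
  | S n' => gmul g (npow g n')
  end.

Definition zpow {G : Group} (g : G) (k : Z) : G :=
  match k with
  | Z0 => gone
  | Zpos p => npow g (Pos.to_nat p)
  | Zneg p => ginv (npow g (Pos.to_nat p))
  end.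

Definition comm {G : Group} (a b : G) : G :=
  gmul (gmul (gmul (ginv a) (ginv b)) a) b.

Definition left_quasi_order {G : Group} (le : G -> G -> Prop) : Prop :=
  (forall g h : G, le g h \/ le h g) /\
  (forall f g h : G, le f g -> le g h -> le f h) /\
  (forall f g h : G, le g h -> le (gmul f g) (gmul f h)).

Definition much_less {G : Group} (le : G -> G -> Prop) (g h : G) : Prop :=
  (forall k : Z, le (zpow g k) h) \/ (forall k : Z, le (zpow g k) (ginv h)).

(* Main.v *)
Require Import Defs.
From Stdlib Require Import ZArith Lia Classical.

Section Grp.
Variable G : Group.
Local Infix "·" := (@gmul G) (at level 40, left associativity).

Ltac rassoc := repeat rewrite <- gmul_assoc.

Lemma mulKl (x y : G) : ginv x · (x · y) = y.
Proof. rewrite gmul_assoc, gmul_Vl, gmul_1l; reflexivity. Qed.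
Lemma mulKr (x y : G) : x · (ginv x · y) = y.
Proof. rewrite gmul_assoc, gmul_Vr, gmul_1l; reflexivity. Qed.
Lemma inv_uniq (x y : G) : x · y = gone -> ginv x = y.
Proof. intro H. rewrite <- (mulKl x y), H, gmul_1r. reflexivity. Qed.
Lemma inv_mul (x y : G) : ginv (x · y) = ginv y · ginv x.
Proof. apply inv_uniq. rassoc. rewrite mulKr, gmul_Vr. reflexivity. Qed.
Lemma inv_inv (x : G) : ginv (ginv x) = x.
Proof. apply inv_uniq. apply gmul_Vl. Qed.
Lemma inv_one : ginv (@gone G) = gone.
Proof. apply inv_uniq. apply gmul_1l. Qed.

Lemma comm_inv (x y : G) : x · y = y · x -> ginv x · y = y · ginv x.
Proof. intro H.
  rewrite <- (gmul_1r _ (ginv x · y)), <- (gmul_Vr _ x).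
  rewrite gmul_assoc. rassoc. rewrite (gmul_assoc _ y x), <- H. rassoc. rewrite mulKl. reflexivity. Qed.

Definition Com (c x : G) := c · x = x · c.

Lemma Com_mul c x y : Com c x -> Com c y -> Com c (x · y).
Proof. unfold Com; intros H1 H2. rewrite gmul_assoc, H1. rassoc. rewrite H2. reflexivity. Qed.
Lemma Com_inv c x : Com c x -> Com c (ginv x).
Proof. unfold Com; intros H. symmetry. apply comm_inv. symmetry. exact H. Qed.
Lemma Com_inv_l c x : Com c x -> Com (ginv c) x.
Proof. unfold Com; intros H. apply comm_inv. exact H. Qed.
Lemma Com_npow c x n : Com c x -> Com c (npow x n).
Proof. intro H; induction n; simpl. unfold Com; rewrite gmul_1l, gmul_1r; reflexivity.
  apply Com_mul; assumption. Qed.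

Variable c : G.
Definition f (k : Z) := zpow c k.

Lemma f_nat n : f (Z.of_nat n) = npow c n.
Proof. destruct n. reflexivity. unfold f. simpl. rewrite SuccNat2Pos.id_succ. reflexivity. Qed.
Lemma f_negnat n : f (- Z.of_nat n) = ginv (npow c n).
Proof. destruct n. simpl. rewrite inv_one; reflexivity. unfold f. simpl. rewrite SuccNat2Pos.id_succ. reflexivity. Qed.

Lemma f_succ k : f (Z.succ k) = c · f k.
Proof.
  destruct (Z_le_gt_dec 0 k).
  - rewrite <- (Z2Nat.id k) by lia. rewrite <- Nat2Z.inj_succ, !f_nat. reflexivity.
  - replace k with (- Z.of_nat (S (Z.to_nat (- k - 1))))%Z by lia.
    replace (Z.succ (- Z.of_nat (S (Z.to_nat (- k - 1)))))%Z with (- Z.of_nat (Z.to_nat (- k - 1)))%Z by lia.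
    rewrite !f_negnat. simpl. rewrite inv_mul.
    assert (HC : Com c (ginv (npow c (Z.to_nat (-k-1))))) by (apply Com_inv, Com_npow; reflexivity).
    rewrite gmul_assoc, HC. rassoc. rewrite gmul_Vr, gmul_1r. reflexivity.
Qed.
Lemma f_pred k : f (Z.pred k) = ginv c · f k.
Proof. rewrite <- (Z.succ_pred k) at 2. rewrite f_succ, mulKl. reflexivity. Qed.
Lemma f0 : f 0 = gone.
Proof. reflexivity. Qed.

Lemma f_add x y : f (x + y) = f x · f y.
Proof.
  induction x using Z.peano_ind.
  - rewrite f0, gmul_1l. reflexivity.
  - rewrite Z.add_succ_l, !f_succ, IHx. apply gmul_assoc.
  - rewrite Z.add_pred_l, !f_pred, IHx. apply gmul_assoc.
Qed.

Lemma f_com x k : Com c x -> Com (f k) x.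
Proof.
  intro H. unfold Com. induction k using Z.peano_ind.
  - rewrite f0, gmul_1l, gmul_1r; reflexivity.
  - rewrite f_succ. rassoc. rewrite IHk, gmul_assoc, H. rassoc. reflexivity.
  - rewrite f_pred. rassoc. rewrite IHk, gmul_assoc, (Com_inv_l _ _ H). rassoc. reflexivity.
Qed.

Lemma f_comf i j : f i · f j = f j · f i.
Proof. rewrite <- !f_add, Z.add_comm. reflexivity. Qed.

Lemma powR x y s n : x · y = y · (x · f s) -> Com c y ->
  x · npow y n = npow y n · (x · f (Z.of_nat n * s)).
Proof.
  intros H Hy. induction n.
  - cbn [npow]. rewrite (gmul_1r G x), (gmul_1l G). change (f (Z.of_nat 0 * s)) with (@gone G). rewrite (gmul_1r G). reflexivity.
  - cbn [npow]. rewrite gmul_assoc, H. rassoc.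
    rewrite (f_com _ s (Com_npow _ _ n Hy)), (gmul_assoc _ x), IHn. rassoc. rewrite <- f_add. do 3 f_equal. f_equal. lia.
Qed.

Lemma powL x y s m : x · y = y · (x · f s) -> Com c x ->
  npow x m · y = y · (npow x m · f (Z.of_nat m * s)).
Proof.
  intros H Hx. induction m.
  - cbn [npow]. rewrite (gmul_1r G), (gmul_1l G). change (f (Z.of_nat 0 * s)) with (@gone G). rewrite (gmul_1r G). reflexivity.
  - cbn [npow]. rassoc. rewrite IHm. rewrite gmul_assoc, H. rassoc.
    rewrite (gmul_assoc _ (f s)), (f_com _ s (Com_npow _ _ m Hx)). rassoc.
    rewrite <- f_add. do 3 f_equal. f_equal. lia.
Qed.

Lemma comm_pow a b r n m : comm a b = f r -> Com c a -> Com c b ->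
  comm (npow a m) (npow b n) = f (Z.of_nat n * (Z.of_nat m * r)).
Proof.
  intros H Ha Hb. unfold comm in *.
  assert (H1 : a · b = b · (a · f r)).
  { rewrite <- H. rassoc. rewrite mulKr, mulKr. reflexivity. }
  pose proof (powL _ _ _ m H1 Ha) as H2.
  pose proof (powR _ _ _ n H2 Hb) as H3.
  rassoc. rewrite H3. rewrite mulKl, mulKl. reflexivity.
Qed.

Variable le : G -> G -> Prop.
Hypothesis Htot : forall g h : G, le g h \/ le h g.
Hypothesis Htr : forall f g h : G, le f g -> le g h -> le f h.
Hypothesis Hli : forall f g h : G, le g h -> le (f · g) (f · h).
Definition lt x y := ~ le y x.

Lemma le_refl x : le x x.
Proof. destruct (Htot x x); assumption. Qed.
Lemma le_cancel g x y : le (g · x) (g · y) -> le x y.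
Proof. intro H. apply (Hli (ginv g)) in H. rewrite !mulKl in H. exact H. Qed.
Lemma lt_l g x y : lt x y -> lt (g · x) (g · y).
Proof. unfold lt. intros H H'. apply H, (le_cancel g), H'. Qed.
Lemma lt_le x y : lt x y -> le x y.
Proof. unfold lt; intro H; destruct (Htot x y); tauto. Qed.
Lemma lt_le_trans x y z : lt x y -> le y z -> lt x z.
Proof. unfold lt; intros H1 H2 H3. apply H1. eapply Htr; eauto. Qed.
Lemma le_lt_trans x y z : le x y -> lt y z -> lt x z.
Proof. unfold lt; intros H1 H2 H3. apply H2. eapply Htr; eauto. Qed.

Definition Bd x i := le x (f i).
Definition Lb x i := le (f i) x.

Lemma Bd_mul x y i j : Com c x -> Bd x i -> Bd y j -> Bd (x · y) (i + j).
Proof.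
  unfold Bd; intros Hc H1 H2. apply (Hli x) in H2. apply (Hli (f j)) in H1.
  rewrite <- (f_com _ j Hc) in H2. rewrite <- f_add, Z.add_comm in H1. eauto.
Qed.
Lemma Lb_mul x y i j : Com c x -> Lb x i -> Lb y j -> Lb (x · y) (i + j).
Proof.
  unfold Lb; intros Hc H1 H2. apply (Hli x) in H2. apply (Hli (f j)) in H1.
  rewrite <- (f_com _ j Hc) in H2. rewrite <- f_add, Z.add_comm in H1. eauto.
Qed.
Lemma Bd_inv x i : Com c x -> Bd x i -> Lb (ginv x) (- i).
Proof.
  unfold Bd, Lb; intros Hc H. apply (Hli (f (-i) · ginv x)) in H.
  repeat rewrite <- gmul_assoc in H. rewrite gmul_Vl, gmul_1r in H.
  rewrite <- (f_com _ i (Com_inv _ _ Hc)) in H.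
  rewrite gmul_assoc, <- f_add, Z.add_opp_diag_l, f0, gmul_1l in H. exact H.
Qed.
Lemma Lb_inv x i : Com c x -> Lb x i -> Bd (ginv x) (- i).
Proof.
  unfold Bd, Lb; intros Hc H. apply (Hli (f (-i) · ginv x)) in H.
  repeat rewrite <- gmul_assoc in H. rewrite gmul_Vl, gmul_1r in H.
  rewrite <- (f_com _ i (Com_inv _ _ Hc)) in H.
  rewrite gmul_assoc, <- f_add, Z.add_opp_diag_l, f0, gmul_1l in H. exact H.
Qed.
Lemma Bd_npow x i n : Com c x -> Bd x i -> Bd (npow x n) (Z.of_nat n * i).
Proof.
  intros Hc H. induction n.
  - apply le_refl.
  - cbn [npow]. replace (Z.of_nat (S n) * i)%Z with (i + Z.of_nat n * i)%Z by lia.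
    apply Bd_mul; assumption.
Qed.
Lemma Lb_npow x i n : Com c x -> Lb x i -> Lb (npow x n) (Z.of_nat n * i).
Proof.
  intros Hc H. induction n.
  - apply le_refl.
  - cbn [npow]. replace (Z.of_nat (S n) * i)%Z with (i + Z.of_nat n * i)%Z by lia.
    apply Lb_mul; assumption.
Qed.

Definition Q k := le gone (f k).
Definition P k := lt gone (f k).
Lemma le_Q x y : le (f x) (f y) -> Q (y - x).
Proof. unfold Q; intro H. apply (Hli (f (-x))) in H. rewrite <- !f_add in H.
  rewrite Z.add_opp_diag_l, f0 in H. replace (y - x)%Z with (-x + y)%Z by lia. exact H. Qed.
Lemma PQ x y : P x -> Q y -> P (x + y).
Proof. unfold P, Q; intros H1 H2. apply (Hli (f x)) in H2. rewrite <- f_add, gmul_1r in H2.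
  eapply lt_le_trans; eauto. Qed.
Lemma PP x y : P x -> P y -> P (x + y).
Proof. intros; apply PQ; auto. apply lt_le; assumption. Qed.
Lemma P_mult K t : P K -> P (Z.of_nat (S t) * K).
Proof. intro H. induction t. replace (Z.of_nat 1 * K)%Z with K by lia. exact H.
  replace (Z.of_nat (S (S t)) * K)%Z with (K + Z.of_nat (S t) * K)%Z by lia. apply PP; auto. Qed.
Lemma not_P0 : ~ P 0.
Proof. unfold P; intro H; apply H, le_refl. Qed.

Lemma pos_from a k1 k2 : Com c a -> lt a (f k1) -> lt (ginv a) (f k2) -> P (k1 + k2).
Proof.
  unfold P; intros Hc H1 H2. apply (lt_l (ginv a)) in H1. rewrite gmul_Vl in H1.
  apply (lt_l (f k1)) in H2. rewrite <- f_add in H2.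
  rewrite <- (f_com _ k1 (Com_inv _ _ Hc)) in H1. eapply lt_le_trans; [exact H1|]. apply lt_le; exact H2.
Qed.
End Grp.
Lemma arith (K M r : Z) : K <> 0%Z -> r <> 0%Z -> exists (N:nat) (w:Z), (w <= -1 /\ (K*w = Z.of_nat N*M - Z.of_nat N*(Z.of_nat N*r) \/ K*w = Z.of_nat N*(Z.of_nat N*r) + Z.of_nat N*M))%Z.
Proof.
intros HK Hr.
set (m := (Z.abs M + 1)%Z).
exists (Z.to_nat (Z.abs K * m)).
rewrite Z2Nat.id by lia.
destruct (Z_lt_le_dec 0 K) as [HK'|HK']; destruct (Z_lt_le_dec 0 r) as [Hr'|Hr'].
- exists (m*M - r*K*m*m)%Z. split; [|left; rewrite Z.abs_eq by lia; ring].
  assert (m*M <= m * Z.abs M)%Z by (apply Z.mul_le_mono_nonneg_l; lia).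
  assert (m*m <= r*K*m*m)%Z. { assert (1 <= r*K)%Z by nia. nia. } nia.
- exists (m*M + r*K*m*m)%Z. split; [|right; rewrite Z.abs_eq by lia; ring].
  assert (m*M <= m * Z.abs M)%Z by (apply Z.mul_le_mono_nonneg_l; lia).
  assert (m*m <= -r*K*m*m)%Z. { assert (1 <= -r*K)%Z by nia. nia. } nia.
- exists (-m*M + r*K*m*m)%Z. split; [|right; rewrite Z.abs_neq by lia; ring].
  assert (m*(-M) <= m * Z.abs M)%Z by (apply Z.mul_le_mono_nonneg_l; lia).
  assert (m*m <= -r*K*m*m)%Z. { assert (1 <= -r*K)%Z by nia. nia. } nia.
- exists (-m*M - r*K*m*m)%Z. split; [|left; rewrite Z.abs_neq by lia; ring].
  assert (m*(-M) <= m * Z.abs M)%Z by (apply Z.mul_le_mono_nonneg_l; lia).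
  assert (m*m <= r*K*m*m)%Z. { assert (1 <= r*K)%Z by nia. nia. } nia.
Qed.

Theorem lemma5p1 (G : Group) (le : G -> G -> Prop) (a b c : G) (r : Z) :
  left_quasi_order le ->
  r <> 0%Z ->
  comm a b = zpow c r ->
  gmul c a = gmul a c ->
  gmul c b = gmul b c ->
  much_less le c a \/ much_less le c b.
Proof.
  intros [Htot [Htr Hli]] Hr Hcomm Hca Hcb.
  destruct (classic (much_less le c a)) as [?|Ha]; [left; assumption|].
  destruct (classic (much_less le c b)) as [?|Hb]; [right; assumption|].
  exfalso. unfold much_less in Ha, Hb.
  apply not_or_and in Ha as [Ha1 Ha2]. apply not_all_ex_not in Ha1 as [k1 Hk1].
  apply not_all_ex_not in Ha2 as [k2 Hk2].
  apply not_or_and in Hb as [Hb1 Hb2]. apply not_all_ex_not in Hb1 as [l1 Hl1].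
  apply not_all_ex_not in Hb2 as [l2 Hl2].
  change (lt G le a (f G c k1)) in Hk1. change (lt G le (ginv a) (f G c k2)) in Hk2.
  change (lt G le b (f G c l1)) in Hl1. change (lt G le (ginv b) (f G c l2)) in Hl2.
  assert (HCa : Com G c a) by exact Hca. assert (HCb : Com G c b) by exact Hcb.
  pose proof (pos_from G c le Htot Htr Hli a k1 k2 HCa Hk1 Hk2) as HK.
  assert (HK0 : (k1 + k2 <> 0)%Z).
  { intro E. rewrite E in HK. exact (not_P0 G c le Htot HK). }
  destruct (arith (k1 + k2) (k1 + k2 + l1 + l2) r HK0 Hr) as [N [w [Hw Hcase]]].
  set (A := npow a N). set (B := npow b N).
  assert (CA : Com G c A) by (apply Com_npow; exact HCa).
  assert (CB : Com G c B) by (apply Com_npow; exact HCb).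
  assert (Ba : Bd G c le a k1) by (apply (lt_le G le Htot); assumption).
  assert (Bb : Bd G c le b l1) by (apply (lt_le G le Htot); assumption).
  assert (La : Lb G c le a (- k2)).
  { rewrite <- (inv_inv G a). apply Bd_inv; auto. apply Com_inv; auto. apply (lt_le G le Htot); assumption. }
  assert (Lb' : Lb G c le b (- l2)).
  { rewrite <- (inv_inv G b). apply Bd_inv; auto. apply Com_inv; auto. apply (lt_le G le Htot); assumption. }
  pose proof (Bd_npow G c le Htot Htr Hli a k1 N HCa Ba) as BA.
  pose proof (Bd_npow G c le Htot Htr Hli b l1 N HCb Bb) as BB.
  pose proof (Lb_npow G c le Htot Htr Hli a _ N HCa La) as LA.
  pose proof (Lb_npow G c le Htot Htr Hli b _ N HCb Lb') as LB.
  fold A in BA, LA. fold B in BB, LB.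
  pose proof (Lb_inv G c le Hli A _ CA LA) as BiA.
  pose proof (Lb_inv G c le Hli B _ CB LB) as BiB.
  pose proof (Bd_inv G c le Hli A _ CA BA) as LiA.
  pose proof (Bd_inv G c le Hli B _ CB BB) as LiB.
  assert (CiA : Com G c (ginv A)) by (apply Com_inv; auto).
  assert (CiB : Com G c (ginv B)) by (apply Com_inv; auto).
  assert (C2 : Com G c (gmul (ginv A) (ginv B))) by (apply Com_mul; auto).
  assert (C3 : Com G c (gmul (gmul (ginv A) (ginv B)) A)) by (apply Com_mul; auto).
  pose proof (Bd_mul G c le Htr Hli _ _ _ _ C3 (Bd_mul G c le Htr Hli _ _ _ _ C2
     (Bd_mul G c le Htr Hli _ _ _ _ CiA BiA BiB) BA) BB) as BC.
  pose proof (Lb_mul G c le Htr Hli _ _ _ _ C3 (Lb_mul G c le Htr Hli _ _ _ _ C2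
     (Lb_mul G c le Htr Hli _ _ _ _ CiA LiA LiB) LA) LB) as LC.
  change (gmul (gmul (gmul (ginv A) (ginv B)) A) B) with (comm A B) in BC, LC.
  unfold A, B in BC, LC.
  rewrite (comm_pow G c a b r N N Hcomm HCa HCb) in BC, LC.
  apply (le_Q G c le Hli) in BC. apply (le_Q G c le Hli) in LC.
  set (t := Z.to_nat (- w - 1)).
  pose proof (P_mult G c le Htot Htr Hli (k1 + k2) t HK) as HP.
  replace (Z.of_nat (S t)) with (- w)%Z in HP by (unfold t; lia).
  apply (not_P0 G c le Htot).
  destruct Hcase as [E|E].
  - replace 0%Z with (- w * (k1 + k2) + (k1 + k2) * w)%Z by ring.
    apply (PQ G c le Htr Hli); auto. rewrite E.
    match type of BC with Q _ _ _ ?x => replace (Z.of_nat N * (k1 + k2 + l1 + l2) - Z.of_nat N * (Z.of_nat N * r))%Z with x by lia end.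
    exact BC.
  - replace 0%Z with (- w * (k1 + k2) + (k1 + k2) * w)%Z by ring.
    apply (PQ G c le Htr Hli); auto. rewrite E.
    match type of LC with Q _ _ _ ?x => replace (Z.of_nat N * (Z.of_nat N * r) + Z.of_nat N * (k1 + k2 + l1 + l2))%Z with x by lia end.
    exact LC.
Qed.
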